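(* Let $G$ be a bipartite graph with bipartition $(X,Y)$, $|X| = n\geq 2$, $|Y|=m$, every $x\in X$ having degree at least $\delta$. Let $(C,x)$ be a tight pair in $G$, with $C = y_1x_1y_2x_2\ldots y_\ell x_\ell y_1$ where $x_i \in X$, $y_i\in Y$. If $y_i \in N(x)$ for some $i$, then $N(x_i) \setminus V(C)$ and $N(x)\setminus V(C)$ are disjoint.
   Context: A tight pair in $G$ is a pair $(C,x)$ where $C$ is a longest cycle in $G$ and $x \in X \setminus V(C)$, chosen such that $|N(x)\cap V(C)|$ is maximum over all pairs $(C',x')$ with $C'$ a longest cycle in $G$ and $x' \in X\setminus V(C')$. ($G$ has a tight pair iff it has no cycle of length $2n$.) *)

(* Defs.v *)
From mathcomp Require Import all_boot.
Set Implicit Arguments.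
Unset Strict Implicit.
Unset Printing Implicit Defensive.

Section Graphs.
Variable T : finType.

Definition simple_graph (e : rel T) : Prop :=
  symmetric e /\ irreflexive e.

Definition bipartition (e : rel T) (X Y : {set T}) : Prop :=
  [/\ X :&: Y = set0, X :|: Y = setT &
      forall u v, e u v -> (u \in X) && (v \in Y) || (u \in Y) && (v \in X)].

Definition nbhd (e : rel T) (v : T) : {set T} := [set u | e v u].

Definition is_cycle (e : rel T) (c : seq T) : bool :=
  [&& 3 <= size c, uniq c & path.cycle e c].

Definition longest_cycle (e : rel T) (c : seq T) : Prop :=
  is_cycle e c /\ forall c', is_cycle e c' -> size c' <= size c.

Definition tight_pair (e : rel T) (X : {set T}) (c : seq T) (x : T) : Prop :=
  [/\ longest_cycle e c, x \in X, x \notin c &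
      forall c' x', longest_cycle e c' -> x' \in X -> x' \notin c' ->
        #|nbhd e x' :&: [set v in c']| <= #|nbhd e x :&: [set v in c]| ].
End Graphs.

(* Main.v *)
Require Import Defs.
From mathcomp Require Import all_boot.

Theorem claim1 (T : finType) (e : rel T) (X Y : {set T}) (n m delta : nat)
  (x0 : T) (c : seq T) (x : T) (i : nat) :
  simple_graph e -> bipartition e X Y ->
  #|X| = n -> 2 <= n -> #|Y| = m ->
  (forall v, v \in X -> delta <= #|nbhd e v|) ->
  tight_pair e X c x ->
  head x0 c \in Y ->
  i < size c %/ 2 ->
  e x (nth x0 c (2 * i)) ->
  [disjoint (nbhd e (nth x0 c (2 * i).+1) :\: [set v in c])
          & (nbhd e x :\: [set v in c])].
Proof.
move=> [esym eirr] _ _ _ _ _ [[cyc longest] _ xnc _] _ hi exy.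
rewrite disjoint_subset; apply/subsetP => y; rewrite !inE => /andP[ync e1].
apply/negP => /andP[_ e2].
have hsz : (2 * i).+1 < size c.
  have h1 : 2 * i.+1 <= size c.
    apply: leq_trans (leq_divM (size c) 2); rewrite [X in _ <= X]mulnC leq_mul2l hi orbT //.
  rewrite mulnS in h1; exact: h1.
set a := nth x0 c (2 * i) in exy *.
set b := nth x0 c (2 * i).+1 in e1 *.
set rest := drop (2 * i).+2 c ++ take (2 * i) c.
have hrot : rot (2 * i) c = a :: b :: rest.
  rewrite /rot (drop_nth x0) ?(ltnW hsz) // (drop_nth x0) //.
have yx : y != x by apply/eqP => E; move: e2; rewrite E eirr.
move: cyc; rewrite /is_cycle -(rot_uniq (2 * i)) -(rot_cycle (2 * i)) -(size_rot (2 * i)) hrot.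
move=> /and3P[_ hu hc].
have := longest (a :: x :: y :: b :: rest).
rewrite /is_cycle /= => H.
have: (size rest).+4 <= size c.
  apply: H; apply/and3P; split => //.
  - move: hu => /=; rewrite !inE => /andP[ha /andP[hb hr]].
    have xin : x \notin a :: b :: rest by rewrite -hrot mem_rot.
    have yin : y \notin a :: b :: rest by rewrite -hrot mem_rot.
    move: xin yin; rewrite !inE !negb_or => /and3P[xa xb xr] /and3P[ya yb yr].
    move: ha; rewrite negb_or => /andP[ab ar].
    by rewrite (eq_sym a x) (eq_sym a y) (eq_sym x y) xa ya ab ar yb yr xb xr hb hr yx.
  - by rewrite esym.
  - move: hc => /= /andP[_ hp]; by rewrite e2 esym e1 hp.
by rewrite -[size c](size_rot (2 * i) c) hrot /= ltnS ltnNge leqnSn.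
Qed.
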